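(* Let $G$ be a finite group. Then $G$ is an elementary abelian $3$-group if and only if all of the following hold: (a) for every maximal subgroup $M$ of $G$, the non-trivial cosets of $M$ in $G$ are exactly two sets, and each of them is a maximal sum-free set in $G$; (b) every maximal sum-free set in $G$ is a non-trivial coset of some maximal subgroup of $G$; (c) $\Phi(G)=1$, where $\Phi(G)$ denotes the Frattini subgroup of $G$ (the intersection of all maximal subgroups of $G$).
   Context: A non-empty subset $S$ of a group $G$ is called sum-free if for all $s_1,s_2\in S$ (including the case $s_1=s_2$) one has $s_1s_2\notin S$. A maximal sum-free set in a finite group $G$ means a sum-free set of largest possible cardinality among all sum-free sets in $G$ (maximal by cardinality). A non-trivial coset of a subgroup $H$ is a coset $gH$ with $g\notin H$. *)

(* Defs.v *)
From mathcomp Require Import all_boot all_fingroup all_solvable.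
Set Implicit Arguments. Unset Strict Implicit. Unset Printing Implicit Defensive.
Local Open Scope group_scope.

Section SumFree.
Variable gT : finGroupType.

Definition sum_free (G S : {set gT}) : bool :=
  [&& S != set0, S \subset G &
      [forall s1 in S, forall s2 in S, s1 * s2 \notin S]].

Definition max_sum_free (G S : {set gT}) : bool :=
  sum_free G S && [forall T : {set gT}, sum_free G T ==> (#|T| <= #|S|)].

Definition nontriv_cosets (M G : {set gT}) : {set {set gT}} :=
  [set x *: M | x in G :\: M].

End SumFree.

(* Main.v *)
Require Import Defs.
From mathcomp Require Import all_boot all_fingroup all_solvable zify.
Set Implicit Arguments. Unset Strict Implicit. Unset Printing Implicit Defensive.
Local Open Scope group_scope.

Section Aux.
Variable gT : finGroupType.
Implicit Types G M : {group gT}.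

Lemma nontriv_cosetsE M G : M \subset G ->
  nontriv_cosets M G = lcosets M G :\ (M : {set gT}).
Proof.
move=> sMG; apply/setP=> C; rewrite !inE.
apply/imsetP/andP => [[x /setDP[xG xM] ->]|[CM /imsetP[x xG eC]]].
  split; last by apply/imsetP; exists x; rewrite ?lcosetE.
  apply/eqP=> eM; case/negP: xM; rewrite -eM; exact: lcoset_refl.
exists x; last by rewrite eC ?lcosetE.
rewrite inE xG andbT; apply: contra CM => xM.
by rewrite eC ?lcosetE lcoset_id.
Qed.

Lemma card_nontriv M G : M \subset G ->
  #|nontriv_cosets M G| = (#|G : M| - 1)%N.
Proof.
move=> sMG; rewrite nontriv_cosetsE // cardsD -card_lcosets.
suff -> : lcosets M G :&: [set (M : {set gT})] = [set (M : {set gT})] by rewrite cards1.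
apply/setIidPr; rewrite sub1set; apply/imsetP; exists 1; first exact: group1.
by rewrite ?lcosetE lcoset_id.
Qed.

Lemma sf_nomem1 G S : sum_free G S -> 1 \notin S.
Proof.
case/and3P=> _ _ /forall_inP H; apply/negP=> S1.
by move: (H _ S1) => /forall_inP /(_ _ S1); rewrite mulg1 S1.
Qed.

Lemma sf_prop G S a b : sum_free G S -> a \in S -> b \in S -> a * b \notin S.
Proof. by case/and3P=> _ _ /forall_inP H aS bS; move: (H _ aS) => /forall_inP /(_ _ bS). Qed.

Lemma sf_inj G S s : sum_free G S -> s \in S -> #[s] = 3 ->
  {in S &, injective (fun x => x *: <[s]>)}.
Proof.
move=> sfS sS os a b aS bS /= eab.
have : b \in a *: <[s]> by rewrite eab lcoset_refl.
case/lcosetP=> y /cycleP[k ->] eb; move: bS; rewrite eb -expg_mod_order os.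
have : (k %% 3 < 3)%N by rewrite ltn_mod.
move: (k %% 3)%N => j; case: j => [|[|[|j]]] // _.
- by rewrite expg0 mulg1.
- by rewrite expg1 => aS'; move: (sf_prop sfS aS sS); rewrite aS'.
- move=> aS'; move: (sf_prop sfS aS' sS).
  by rewrite -mulgA -expgSr -os expg_order mulg1 aS.
Qed.

Lemma sf_bound G S s : sum_free G S -> s \in S -> #[s] = 3 ->
  (#|S| <= #|G : <[s]>|)%N.
Proof.
move=> sfS sS os; rewrite -(card_in_imset (sf_inj sfS sS os)) -card_lcosets.
apply: subset_leq_card; apply/subsetP=> C /imsetP[x xS ->].
case/and3P: sfS => _ /subsetP sSG _.
by apply/imsetP; exists x; rewrite ?lcosetE ?sSG.
Qed.

End Aux.

Section Fwd.
Variable gT : finGroupType.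
Variable G : {group gT}.
Hypothesis abG : 3.-abelem G.

Let cG x y : x \in G -> y \in G -> commute x y.
Proof. by move=> xG yG; apply: (centsP (abelem_abelian abG)). Qed.

Let x3 x : x \in G -> x ^+ 3 = 1.
Proof. by move=> xG; case/(abelemP (isT : prime 3)): abG => _ ->. Qed.

Lemma coset_sf (M : {group gT}) x : M \subset G -> x \in G -> x \notin M ->
  sum_free G (x *: M).
Proof.
move=> sMG xG xM; apply/and3P; split.
- by apply/set0Pn; exists x; apply: lcoset_refl.
- apply/subsetP=> y /lcosetP[m mM ->]; rewrite groupM // (subsetP sMG) //.
- apply/forall_inP=> a /lcosetP[m1 m1M ->]; apply/forall_inP=> b /lcosetP[m2 m2M ->].
  rewrite mem_lcoset -!mulgA mulKg; apply: contra xM => H.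
  have := groupM (groupM (groupVr m1M) H) (groupVr m2M).
  by rewrite mulKg mulgK.
Qed.

Lemma sf_le T : sum_free G T -> (3 * #|T| <= #|G|)%N.
Proof.
move=> sfT; have [T0 sTG _] := and3P sfT.
case/set0Pn: T0 => s sT.
have sG : s \in G by apply: (subsetP sTG).
have s1 : s != 1 by apply: contraNneq (sf_nomem1 sfT) => <-.
have os := abelem_order_p abG sG s1.
have := sf_bound sfT sT os.
rewrite -(Lagrange (_ : <[s]> \subset G)) ?cycle_subG //.
rewrite -[#|<[s]>|]/#[s] os => H; by rewrite leq_mul2l.
Qed.

Lemma sf_exact S s a : sum_free G S -> (3 * #|S| = #|G|)%N -> s \in S -> a \in G ->
  exists2 t, t \in S & t \in a *: <[s]>.
Proof.
move=> sfS cS sS aG; have [_ sSG _] := and3P sfS.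
have sG : s \in G by apply: (subsetP sSG).
have s1 : s != 1 by apply: contraNneq (sf_nomem1 sfS) => <-.
have os := abelem_order_p abG sG s1.
set I := [set x *: <[s]> | x in S].
have sI : I \subset lcosets <[s]> G.
  by apply/subsetP=> C /imsetP[x xS ->]; apply/imsetP; exists x; rewrite ?lcosetE ?(subsetP sSG).
have eI : I = lcosets <[s]> G.
  apply/eqP; rewrite eqEcard sI card_lcosets /I (card_in_imset (sf_inj sfS sS os)).
  move: cS; rewrite -(Lagrange (_ : <[s]> \subset G)) ?cycle_subG //.
  have cs : #|<[s]>%G| = 3 := os.
  rewrite cs => /eqP; rewrite eqn_pmul2l // => /eqP ->; exact: leqnn.
have : a *: <[s]> \in I by rewrite eI; apply/imsetP; exists a; rewrite ?lcosetE.
case/imsetP=> t tS et; exists t => //; rewrite et; exact: lcoset_refl.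
Qed.

Lemma sf_key S x y : sum_free G S -> (3 * #|S| = #|G|)%N -> x \in S -> y \in S ->
  x ^+ 2 * y ^+ 2 \in S.
Proof.
move=> sfS cS xS yS; have [_ sSG _] := and3P sfS.
have xG : x \in G by apply: (subsetP sSG).
have yG : y \in G by apply: (subsetP sSG).
have x4 : x ^+ 4 = x by rewrite (expgD x 3 1) x3 // mul1g.
have [t tS] := sf_exact sfS cS xS (groupM (groupX 2 xG) (groupX 2 yG)).
case/lcosetP=> z /cycleP[k ->] et; move: tS.
have xG' : x \in G := xG.
rewrite et -(expg_mod_order x k).
have : (k %% #[x] < 3)%N.
  by rewrite (abelem_order_p abG xG) ?ltn_mod //; apply: contraNneq (sf_nomem1 sfS) => <-.
move: (k %% #[x])%N => j; case: j => [|[|[|j]]] // _.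
- by rewrite expg0 mulg1.
- rewrite expg1 -mulgA -(cG xG (groupX 2 yG)) mulgA -expgSr x3 // mul1g => H.
  by move: (sf_prop sfS yS yS); rewrite -[y * y]/(y ^+ 2) H.
- rewrite -mulgA -(cG (groupX 2 xG) (groupX 2 yG)) mulgA -expgD x4 => H.
  by move: (sf_prop sfS H yS); rewrite -mulgA -expgSr x3 // mulg1 xS.
Qed.

Lemma sf_close S a b c : sum_free G S -> (3 * #|S| = #|G|)%N ->
  a \in S -> b \in S -> c \in S -> a * b * c ^+ 2 \in S.
Proof.
move=> sfS cS aS bS cS'; have [_ sSG _] := and3P sfS.
have aG : a \in G by apply: (subsetP sSG).
have bG : b \in G by apply: (subsetP sSG).
have := sf_key sfS cS (sf_key sfS cS aS bS) cS'.
rewrite expgMn; last by apply: cG; apply: groupX.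
rewrite -!expgM /=.
have e4 z : z \in G -> z ^+ 4 = z by move=> zG; rewrite (expgD z 3 1) x3 // mul1g.
by rewrite !e4.
Qed.

End Fwd.
Unset Implicit Arguments.

Theorem theorem1 (gT : finGroupType) (G : {group gT}) :
  3.-abelem G <->
  [/\ (forall M : {group gT}, maximal M G ->
         #|nontriv_cosets M G| = 2 /\
         (forall C, C \in nontriv_cosets M G -> max_sum_free G C)),
      (forall S : {set gT}, max_sum_free G S ->
         exists2 M : {group gT}, maximal M G & S \in nontriv_cosets M G)
    & 'Phi(G) = 1].
Proof.
split.
  move=> abG; have pG := abelem_pgroup abG.
  have cG x y : x \in G -> y \in G -> commute x y.
    by move=> xG yG; apply: (centsP (abelem_abelian abG)).
  have x3 x : x \in G -> x ^+ 3 = 1.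
    by move=> xG; case/(abelemP (isT : prime 3)): abG => _ ->.
  split.
  - move=> M maxM; have sMG := proper_sub (maxgroupp maxM); split.
      by rewrite card_nontriv // (p_maximal_index pG maxM).
    move=> C /imsetP[x /setDP[xG xM] ->]; apply/andP; split; first exact: coset_sf.
    apply/forallP=> T; apply/implyP=> sfT; rewrite card_lcoset.
    have := sf_le abG sfT; rewrite -(Lagrange sMG) (p_maximal_index pG maxM).
    by rewrite [(#|M| * 3)%N]mulnC leq_mul2l.
  - move=> S /andP[sfS /forallP maxS].
    have [S0 sSG _] := and3P sfS; case/set0Pn: S0 => s0 s0S.
    have s0G : s0 \in G by apply: (subsetP sSG).
    have s01 : s0 != 1 by apply: contraNneq (sf_nomem1 sfS) => <-.
    have [eG | [M maxM _]] := maximal_exists (sub1G G).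
      by move: s0G; rewrite -eG inE (negPf s01).
    have sMG := proper_sub (maxgroupp maxM).
    have [_ [x xG xM]] := properP (maxgroupp maxM).
    have i3 := p_maximal_index pG maxM.
    have cS : (3 * #|S| = #|G|)%N.
      apply/eqP; rewrite eqn_leq sf_le //=.
      have := implyP (maxS (x *: M)) (coset_sf sMG xG xM).
      by rewrite card_lcoset -(Lagrange sMG) i3 [(#|M| * 3)%N]mulnC leq_mul2l.
    pose MS := s0^-1 *: S.
    have gMS : group_set MS.
      apply/group_setP; split.
        by rewrite mem_lcoset invgK mulg1.
      move=> u v /lcosetP[a aS ->] /lcosetP[b bS ->].
      have aG : a \in G by apply: (subsetP sSG).
      have bG : b \in G by apply: (subsetP sSG).
      rewrite mem_lcoset invgK mulgA mulKVg (cG _ _ (groupVr s0G) bG) mulgA.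
      have : s0 ^+ 2 * s0 = 1 by rewrite -expgSr x3.
      move/(canRL (mulgK s0)); rewrite mul1g => <-.
      by have := sf_close abG sfS cS aS bS s0S.
    pose MG := Group gMS.
    have sMSG : MG \subset G.
      apply/subsetP=> u /lcosetP[a aS ->]; rewrite groupM ?groupV //.
      exact: (subsetP sSG).
    have iMS : #|G : MG| = 3.
      apply/eqP; rewrite -(eqn_pmul2l (_ : 0 < #|S|)%N); last first.
        by rewrite card_gt0; apply/set0Pn; exists s0.
      rewrite -{1}(card_lcoset S s0^-1) -[#|s0^-1 *: S|]/#|MG| (Lagrange sMSG).
      by rewrite -cS mulnC.
    exists MG; first by apply: p_index_maximal; rewrite ?iMS.
    apply/imsetP; exists s0; last by rewrite /= lcosetKV.
    rewrite inE s0G andbT /= mem_lcoset invgK.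
    exact: (sf_prop sfS s0S s0S).
  - by apply/eqP; rewrite (trivg_Phi pG).
case=> HA _ HPhi.
have [P sylP] := Sylow_exists 3 G.
have [sPG pP p'P] := and3P sylP.
case: (maximal_exists sPG) => [eP | [M maxM sPM]].
  have pG : 3.-group G by rewrite /pgroup -eP.
  by rewrite -(trivg_Phi pG) HPhi eqxx.
have [c _] := HA M maxM.
rewrite card_nontriv ?(proper_sub (maxgroupp maxM)) in c.
have i3 : #|G : M| = 3 by lia.
have := pnat_dvd (indexgS G sPM) p'P; rewrite i3 => H. have : false := H. by []. by [].
Qed.
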